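(* Let $m\geq 2$ be an integer and $n'=2^{m-1}$. Then the number of subgroups of the direct product $\mathbb{Z}_2\times Q_{4n'}$ is $$|L(\mathbb{Z}_2\times Q_{4n'})|=5\sigma(n')+3\tau(n')-2n'+2.$$
   Context: $L(G)$ denotes the set of all subgroups of a group $G$. $Q_{4n'}=\langle x,y\mid x^{2n'}=e,\ y^2=x^{n'},\ y^{-1}xy=x^{-1}\rangle$ is the generalized quaternion group of order $4n'$. For a positive integer $k$, $\tau(k)$ is the number of positive divisors of $k$ and $\sigma(k)$ is their sum. *)

(* Defs.v *)
From mathcomp Require Import all_boot all_fingroup all_solvable extremal zmodp.
Set Implicit Arguments.
Unset Strict Implicit.
Unset Printing Implicit Defensive.

Definition tau (k : nat) : nat := size (divisors k).
Definition sigma (k : nat) : nat := \sum_(d <- divisors k) d.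

(* The direct product Z_2 x Q_{4n'} as a finite group type, where 'I_2 is the
   additive cyclic group Z/2Z (zmodp) and
   'Q_k is MathComp's generalized quaternion group of order k (k = 2^e >= 8). *)
Definition Z2xQ (k : nat) : finGroupType := prod 'I_2 (quaternion_gtype k).

(* Main.v *)
Require Import Defs.
From mathcomp Require Import all_boot all_fingroup all_solvable extremal zmodp.
From mathcomp Require Import zify.
Set Implicit Arguments. Unset Strict Implicit. Unset Printing Implicit Defensive.
Module Aux.
Local Open Scope nat_scope.

Lemma geo a n : \sum_(j <- iota a n) 2 ^ (a + n - j) = 2 ^ n.+1 - 2.
Proof.
elim: n a => [|n IH] a; first by rewrite big_nil.
rewrite /= big_cons (_ : a + n.+1 - a = n.+1); last by lia.
rewrite (_ : a + n.+1 = a.+1 + n); last by lia.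
rewrite IH !expnS.
have : 0 < 2 ^ n by rewrite expn_gt0.
lia.
Qed.

Definition gg k j := if j == 0 then 3 else if j == k then 5 else 3 + 4 * 2 ^ (k - j).

Lemma sumgg k : 0 < k -> \sum_(j <- iota 0 k.+1) gg k j = 4 * 2 ^ k + 3 * k - 3.
Proof.
move=> k1; rewrite /= big_cons {1}/gg eqxx.
have E : iota 1 k = iota 1 (k - 1) ++ [:: k] by rewrite -{1}(subnK k1) iotaD subnKC.
rewrite E big_cat big_seq1 /= {2}/gg eqxx (_ : k == 0 = false); last by lia.
rewrite (eq_big_seq (fun j => 3 + 4 * 2 ^ (1 + (k - 1) - j))); last first.
  move=> j; rewrite mem_iota => /andP[j1 j2].
  rewrite /gg (_ : j == 0 = false); last by lia.
  rewrite (_ : j == k = false); last by lia.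
  by rewrite subnKC.
rewrite big_split /= -big_distrr /= geo.
rewrite (_ : \sum_(j <- iota 1 (k - 1)) 3 = 3 * (k - 1)).
  have : 1 < 2 ^ (k - 1).+1 by rewrite -{1}(expn0 2) ltn_exp2l.
  rewrite (_ : (2 ^ (k - 1).+1 = 2 ^ k)); last by congr (_ ^ _); lia.
  move: k1; lia.
by rewrite big_const_seq count_predT size_iota iter_addn_0 mulnC.
Qed.

End Aux.
Import Aux.
Section Ax.
Local Open Scope group_scope.

Section Decomp.
Variables (gT : finGroupType) (G A : {group gT}).
Hypothesis sAG : A \subset G.
Hypothesis hA2 : forall g h, g \in G :\: A -> h \in G :\: A -> g * h \in A.

Definition Tset (C : {set gT}) :=
  [set t in G :\: A | (t \in 'N(C)) && (t ^+ 2 \in C)].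
Definition Hs (C : {group gT}) :=
  [set H : {group gT} | [&& H \subset G, ~~ (H \subset A) & (H :&: A)%G == C]].

Lemma outV t : t \in G :\: A -> t^-1 \in G :\: A.
Proof. by case/setDP=> Gt nAt; rewrite inE !groupV nAt Gt. Qed.

Lemma outD (H : {group gT}) t : H \subset G -> t \in H :\: A ->
  H :\: A = (H :&: A) :* t.
Proof.
move=> sHG /setDP[Ht nAt]; have Gt := subsetP sHG t Ht.
apply/setP=> u; apply/idP/idP.
  case/setDP=> Hu nAu; apply/rcosetP; exists (u * t^-1); last by rewrite mulgKV.
  rewrite inE groupM ?groupV //=; apply: hA2; first by rewrite inE nAu (subsetP sHG).
  by apply: outV; rewrite inE nAt Gt.
case/rcosetP=> c /setIP[Hc Ac] ->; rewrite inE (groupM Hc Ht) andbT.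
by apply: contra nAt => Act; rewrite -(mulKg c t) groupM ?groupV.
Qed.

Lemma card_out (H : {group gT}) : H \subset G -> ~~ (H \subset A) ->
  #|H| = (#|H :&: A| * 2)%N.
Proof.
move=> sHG nHA; have /subsetPn[t Ht nAt] := nHA.
rewrite -(cardsID A H) (outD sHG (t := t)) ?inE ?Ht ?nAt // card_rcoset.
by rewrite muln2 addnn.
Qed.
Lemma nAG : G \subset 'N(A).
Proof.
apply/subsetP=> g Gg; have [Ag | nAg] := boolP (g \in A); first exact: (subsetP (normG A)).
rewrite inE; apply/subsetP=> _ /imsetP[a Aa ->].
have gA : g \in G :\: A by rewrite inE nAg Gg.
rewrite conjgE; apply: hA2; first exact: outV.
rewrite inE (groupM (subsetP sAG a Aa) Gg) andbT.
by apply: contra nAg => Aag; rewrite -(mulKg a g) groupM ?groupV.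
Qed.

Lemma Tset_group (C : {group gT}) t : t \in Tset C -> group_set (C :|: C :* t).
Proof.
case/setIdP=> Gt /andP[nCt t2C].
have nCti : t^-1 \in 'N(C) by rewrite groupV.
have E1 : forall b, t * b * t^-1 = b ^ t^-1 by move=> b; rewrite conjgE invgK mulgA.
apply/group_setP; split; first by rewrite inE group1.
move=> u v; rewrite !inE => /orP[Cu | /rcosetP[a Ca ->]] /orP[Cv | /rcosetP[b Cb ->]].
- by rewrite groupM.
- by apply/orP; right; apply/rcosetP; exists (u * b); rewrite ?groupM ?mulgA.
- apply/orP; right; apply/rcosetP; exists (a * (v ^ t^-1)); last first.
    by rewrite -E1 !mulgA mulgKV.
  by rewrite groupM ?memJ_norm.
- apply/orP; left.
  have -> : a * t * (b * t) = a * (b ^ t^-1) * t ^+ 2.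
    by rewrite -E1 expgS expg1 !mulgA mulgKV.
  by rewrite groupM // groupM // memJ_norm.
Qed.

Lemma key (C : {group gT}) : C \subset A -> #|Tset C| = (#|Hs C| * #|C|)%N.
Proof.
move=> sCA.
have uniqH : forall t, t \in Tset C ->
    \sum_(H in Hs C) (t \in H : nat) = 1%N.
  move=> t Tt; have gS := Tset_group Tt.
  have /setIdP[/setDP[Gt nAt] /andP[nCt t2C]] := Tt.
  pose H := Group gS.
  have HtS : t \in H by rewrite inE; apply/orP; right; rewrite rcoset_refl.
  have sHG : H \subset G.
    apply/subsetP=> u; rewrite !inE => /orP[/(subsetP sCA)/(subsetP sAG) //|].
    by case/rcosetP=> c Cc ->; rewrite groupM // (subsetP sAG) // (subsetP sCA).
  have HA : H :&: A = C.
    apply/setP=> u; rewrite !inE /=; apply/idP/idP.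
      case/andP => /orP[//| /rcosetP[c Cc ->]] Act.
      by case/negP: nAt; have := groupM (groupVr (subsetP sCA c Cc)) Act; rewrite mulKg.
    by move=> Cu; rewrite (subsetP sCA) // Cu.
  have HHs : H \in Hs C.
    rewrite inE sHG /=; apply/andP; split.
      by apply/subsetPn; exists t.
    by apply/eqP; apply: val_inj.
  have eqH : forall H0 : {group gT}, H0 \in Hs C -> (t \in H0) = (H0 == H).
    move=> H0; rewrite inE => /and3P[sH0G _ /eqP H0A].
    apply/idP/eqP=> [tH0|-> //]; apply: val_inj => /=.
    rewrite -(setID H0 A) (outD sH0G (t := t)); last by rewrite inE tH0 nAt.
    have -> : H0 :&: A = C by rewrite -H0A.
    by [].
  rewrite (eq_bigr (fun H0 => (H0 == H) : nat)); last first.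
    by move=> H0 /eqH ->.
  rewrite (bigD1 H) //= eqxx big1 // => H0 /andP[_ /negPf -> //].
rewrite -sum1_card (eq_bigr (fun t => \sum_(H in Hs C) (t \in H : nat))); last first.
  by move=> t /uniqH.
rewrite exchange_big /= -sum_nat_const; apply: eq_bigr => H.
rewrite inE => /and3P[sHG nHA /eqP HA0].
have HA : H :&: A = C by rewrite -HA0.
have /subsetPn[t Ht nAt] := nHA.
have E : [set u in Tset C | u \in H] = H :\: A.
  apply/setP=> u; rewrite !inE; apply/idP/idP.
    by case/andP=> /andP[/andP[-> _] _] ->.
  case/andP=> nAu Hu; rewrite Hu nAu (subsetP sHG) //= andbT.
  have Gu := subsetP sHG u Hu.
  apply/andP; split; last by rewrite -HA inE groupM ?Hu ?hA2 // inE nAu Gu.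
  have nu : u \in 'N(H :&: A) by rewrite -sub1set; apply: normsI; rewrite sub1set ?(subsetP (normG H)) ?(subsetP nAG).
  by move: nu; rewrite HA inE.
have cardC : #|H :\: A| = #|C| by rewrite (outD sHG (t:=t)) ?card_rcoset ?HA // inE Ht nAt.
rewrite -cardC -E -sum1_card big_mkcond /= [RHS]big_mkcond /=; apply: eq_bigr => u _.
rewrite [in RHS]inE; by case: (u \in Tset C); case: (u \in H).
Qed.

Lemma decomp (F : {group gT} -> nat) (F' : {set gT} -> nat) :
  (forall H : {group gT}, H \subset G -> ~~ (H \subset A) -> F H = F' (H :&: A)) ->
  \sum_(H in subgroups G) F H =
    (\sum_(H in subgroups A) F H + \sum_(C in subgroups A) F' C * (#|Tset C| %/ #|C|))%N.
Proof.
move=> hF; rewrite (bigID (fun H : {group gT} => H \subset A)) /=; congr (_ + _)%N.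
  apply: eq_bigl => H; rewrite !inE; apply/andP/idP => [[] //|sHA].
  by split=> //; apply: subset_trans sHA sAG.
rewrite (partition_big (fun H : {group gT} => (H :&: A)%G) (mem (subgroups A))) /=; last first.
  by move=> H _; rewrite inE subsetIr.
apply: eq_bigr => C; rewrite inE => sCA.
rewrite key // mulnK // mulnC -sum_nat_const.
apply: eq_big => [H | H].
  by rewrite !inE andbA.
by case/andP=> /andP[]; rewrite inE => sHG nHA /eqP <-; apply: hF.
Qed.
End Decomp.



Lemma divisors2 k : divisors (2 ^ k) = [seq 2 ^ j | j <- iota 0 k.+1]%N.
Proof.
apply: (irr_sorted_eq ltn_trans ltnn); first exact: sorted_divisors_ltn.
  rewrite sorted_map; apply: sub_sorted (iota_ltn_sorted 0 k.+1) => i j /=.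
  by rewrite ltn_exp2l.
move=> d; rewrite -dvdn_divisors ?expn_gt0 //; apply/(dvdn_pfactor _ _ (isT : prime 2))/mapP.
  by case=> j jk ->; exists j; rewrite // mem_iota.
by case=> j; rewrite mem_iota add0n ltnS => jk ->; exists j.
Qed.

Lemma sum_cyclic (gT : finGroupType) (a : gT) (F : {group gT} -> nat) :
  \sum_(H in subgroups <[a]>) F H =
  \sum_(d <- divisors #[a]) F <[a ^+ (#[a] %/ d)]>%G.
Proof.
rewrite (eq_bigr (fun H : {group gT} => \sum_(d <- divisors #[a]) ((#|H| == d) * F H)%N)); last first.
  move=> H; rewrite inE => sHa.
  have Hd : #|H| \in divisors #[a] by rewrite -dvdn_divisors ?order_gt0 // cardSg.
  rewrite (big_rem _ Hd) /= eqxx mul1n big1_seq ?addn0 // => d /andP[_ dr].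
  case: eqP dr => [<-|//]; by rewrite mem_rem_uniqF ?divisors_uniq.
rewrite exchange_big /=; apply: eq_big_seq => d; rewrite -dvdn_divisors ?order_gt0 // => da.
transitivity (\sum_(H in [set <[a ^+ (#[a] %/ d)]>%G]) F H); last by rewrite big_set1.
rewrite -(cycle_sub_group da) big_mkcond [RHS]big_mkcond.
apply: eq_bigr => H _; rewrite !inE; case: (H \subset <[a]>); case: (#|H| == d) => //=; by rewrite ?mul1n ?mul0n.
Qed.

End Ax.
Section Cx.
Local Open Scope group_scope.


Section Conc.
Variables (Q : finGroupType) (x : Q) (k : nat).
Hypothesis k1 : 0 < k.
Hypothesis ox : #[x] = (2 ^ k)%N.
Hypothesis oQ : #|Q| = (2 ^ k.+1)%N.
Hypothesis o4 : forall q : Q, q \notin <[x]> -> #[q] = 4%N.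
Hypothesis inv : forall c q : Q, c \in <[x]> -> q \notin <[x]> -> c ^ q = c^-1.
Hypothesis inv2 : forall u : Q, #[u] = 2%N -> u = x ^+ (2 ^ k.-1).

Let z := x ^+ (2 ^ k.-1).

Lemma sq_out q : q \notin <[x]> -> q ^+ 2 = z.
Proof. by move=> nq; apply: inv2; rewrite orderXdiv o4 // dvdn_mulr. Qed.

Lemma z_in : z \in <[x]>.
Proof. exact: mem_cycle. Qed.

Lemma idx2 g h : g \notin <[x]> -> h \notin <[x]> -> g * h \in <[x]>.
Proof.
move=> ng nh.
have E : <[x]> :* g = ~: <[x]>.
  apply/eqP; rewrite eqEcard card_rcoset; apply/andP; split.
    apply/subsetP=> _ /rcosetP[c Xc ->]; rewrite inE.
    by apply: contra ng => Xcg; rewrite -(mulKg c g) groupM ?groupV.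
  have := cardsC <[x]>; rewrite cardT /= -cardE oQ -orderE ox expnS => H.
  by rewrite -(leq_add2l (2 ^ k)) H mul2n -addnn.
have : h \in <[x]> :* g by rewrite E inE.
rewrite mem_rcoset => Xhg.
have -> : g * h = (h * g^-1) ^ g^-1 * g ^+ 2.
  by rewrite conjgE invgK expgS expg1 !mulgA !mulgKV.
rewrite sq_out // groupM ?z_in // inv ?groupV //.
Qed.

Lemma I2mul (a b : 'I_2) : a != 1 -> b != 1 -> a * b = 1.
Proof. by case: a => [[|[|//]]] ? //; case: b => [[|[|//]]] ? // *; apply/val_inj. Qed.
Lemma I2sq (a : 'I_2) : a ^+ 2 = 1.
Proof. by case: a => [[|[|//]]] ? //; apply/val_inj. Qed.
Lemma I2conj (a b : 'I_2) : a ^ b = a.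
Proof. by case: a => [[|[|//]]] ?; case: b => [[|[|//]]] ?; apply/val_inj. Qed.
Lemma I2inv (a : 'I_2) : a^-1 = a.
Proof. by case: a => [[|[|//]]] ?; apply/val_inj. Qed.

Lemma pairX (a : 'I_2) (q : Q) n : (a, q) ^+ n = (a ^+ n, q ^+ n).
Proof. by elim: n => [//|n IH]; rewrite !expgS IH. Qed.

Lemma memcyc (c : Q) (g : prod 'I_2 Q) :
  (g \in <[((1 : 'I_2), c)]>) = (g.1 == 1) && (g.2 \in <[c]>).
Proof.
case: g => g1 g2 /=; apply/cycleP/andP => [[i]|[/eqP -> /cycleP[i ->]]].
  by rewrite pairX expg1n => -[-> ->]; rewrite mem_cycle.
by exists i; rewrite pairX expg1n.
Qed.

Lemma memXe e i : e %| #[x] -> (x ^+ i \in <[x ^+ e]>) = (e %| i).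
Proof.
move=> ex; apply/cycleP/idP => [[j /eqP]|/dvdnP[j ->]]; last first.
  by exists j; rewrite -expgM mulnC.
rewrite -expgM eq_expg_mod_order => /eqP E.
by rewrite /dvdn -(modn_dvdm i ex) E modn_dvdm // mulnC modnMl.
Qed.

Definition AA := setX [set: 'I_2] <[x]>.
Lemma group_AA : group_set AA. Proof. exact: group_setX. Qed.
Canonical AA_group := Group group_AA.
Definition xx : prod 'I_2 Q := (1, x).
Definition w : prod 'I_2 Q := (1, z).

Lemma ordxx : #[xx] = (2 ^ k)%N.
Proof.
rewrite -ox; apply/eqP; rewrite eqn_dvd !order_dvdn; apply/andP; split.
  by rewrite /xx pairX expg1n expg_order.
by have := congr1 snd (expg_order xx); rewrite /xx pairX /= => ->.
Qed.

Lemma hA2G g h : g \in [set: prod 'I_2 Q] :\: AA -> h \in [set: prod 'I_2 Q] :\: AA ->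
  g * h \in AA.
Proof.
case: g => g1 g2; case: h => h1 h2; rewrite !inE /= !andbT /= => ng nh.
exact: idx2.
Qed.

Lemma TsetG (C : {group prod 'I_2 Q}) : C \subset AA ->
  Tset [set: prod 'I_2 Q] AA C = if w \in C then [set: prod 'I_2 Q] :\: AA else set0.
Proof.
move=> sCA; apply/setP=> t; case: t => t1 t2; rewrite /Tset !inE /=.
case Ht : (t2 \in <[x]>) => /=; first by case: ifP; rewrite ?inE ?Ht.
have nt : t2 \notin <[x]> by rewrite Ht.
rewrite pairX I2sq sq_out //.
have -> : C :^ (t1, t2) \subset C.
  apply/subsetP=> _ /imsetP[c Cc ->].
  have := subsetP sCA c Cc; case: c Cc => c1 c2 Cc; rewrite inE /= => /andP[_ Xc2].
  have -> : (c1, c2) ^ (t1, t2) = (c1, c2)^-1.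
    by rewrite (_ : (c1, c2) ^ (t1, t2) = (c1 ^ t1, c2 ^ t2)) // (_ : (c1, c2)^-1 = (c1^-1, c2^-1)) // I2conj I2inv inv //.
  by rewrite groupV.
by case: ifP; rewrite !inE ?Ht.
Qed.

Lemma cardGdA : #|[set: prod 'I_2 Q] :\: AA| = (2 ^ k.+1)%N.
Proof.
rewrite cardsD setTI cardsT card_prod card_ord oQ cardsX cardsT card_ord -orderE ox.
by rewrite expnS mul2n -addnn mul2n -addnn addnK.
Qed.

Lemma memC e (g : prod 'I_2 Q) :
  (g \in <[xx ^+ e]>) = (g.1 == 1) && (g.2 \in <[x ^+ e]>).
Proof. by rewrite /xx pairX expg1n memcyc. Qed.

Lemma sXA : <[xx]> \subset AA.
Proof. by rewrite cycle_subG !inE /= cycle_id. Qed.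

Lemma hA2A g h : g \in AA :\: <[xx]> -> h \in AA :\: <[xx]> -> g * h \in <[xx]>.
Proof.
case: g => g1 g2; case: h => h1 h2; rewrite !inE /= -[<[xx]>]/(<[xx ^+ 1]>) !memC /=.
rewrite !expg1 => /andP[ng Xg] /andP[nh Xh].
rewrite ?Xg ?Xh ?andbT in ng nh; by rewrite I2mul // eqxx groupM.
Qed.

Lemma cardC j : j <= k -> #|<[xx ^+ (2 ^ (k - j))]>| = (2 ^ j)%N.
Proof.
move=> jk; rewrite -orderE orderXdiv ordxx ?dvdn_exp2l ?leq_subr //.
by rewrite -expnB ?leq_subr // subKn.
Qed.

Lemma wC j : j <= k -> (w \in <[xx ^+ (2 ^ (k - j))]>) = (0 < j).
Proof.
move=> jk; rewrite memC /= /z memXe; last by rewrite ox dvdn_exp2l ?leq_subr.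
rewrite dvdn_Pexp2l //; apply/idP/idP; move: k1 jk; clear; lia.
Qed.

Lemma TsetA e : Tset AA <[xx]> <[xx ^+ e]> =
  setX [set~ (1 : 'I_2)] [set q in <[x]> | q ^+ 2 \in <[x ^+ e]>].
Proof.
apply/setP=> -[t1 t2]; rewrite /Tset !inE /= -[<[xx]>]/(<[xx ^+ 1]>) !memC /= expg1.
rewrite -!expg2 I2sq eqxx /=.
case Xt : (t2 \in <[x]>); rewrite /= ?andbF // !andbT.
case: (t1 == 1) => //=.
have -> : <[xx ^+ e]> :^ (t1, t2) \subset <[xx ^+ e]>; last by [].
apply/subsetP=> _ /imsetP[[c1 c2] Cc ->].
have -> // : (c1, c2) ^ (t1, t2) = (c1, c2).
rewrite (_ : (c1, c2) ^ (t1, t2) = (c1 ^ t1, c2 ^ t2)) // I2conj.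
move: Cc; rewrite memC /= => /andP[_ /(subsetP (cycleX x e)) /cycleP[a ->]].
move/cycleP: Xt => [b ->].
by rewrite conjgE (commuteX2 a b (commute_refl x)) mulKg.
Qed.

Lemma cardTA j : j <= k ->
  #|Tset AA <[xx]> <[xx ^+ (2 ^ (k - j))]>| = if j == k then (2 ^ k)%N else (2 ^ j.+1)%N.
Proof.
move=> jk; rewrite TsetA cardsX cardsC1 card_ord mul1n.
case: eqP => [->|/eqP njk].
  rewrite subnn expn0 expg1 -[RHS]ox orderE.
  rewrite (_ : [set q in _ | _] = <[x]>) //; apply/setP=> q.
  by rewrite !inE; case Xq : (q \in <[x]>) => //=; rewrite groupX.
have jk' : j < k by rewrite ltn_neqAle njk.
have -> : [set q in <[x]> | q ^+ 2 \in <[x ^+ (2 ^ (k - j))]>] = <[x ^+ (2 ^ (k - j.+1))]>.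
  apply/setP=> q; rewrite inE.
  have [Xq|nXq] := boolP (q \in <[x]>); last first.
    by apply/esym; apply: contraNF nXq; apply: (subsetP (cycleX x _)).
  case/cycleP: Xq => i ->; rewrite -expgM !memXe ?ox ?dvdn_exp2l ?leq_subr //.
  by rewrite (_ : k - j = (k - j.+1).+1) ?expnS 1?mulnC ?dvdn_pmul2r //; move: jk'; clear; lia.
rewrite -orderE orderXdiv ox ?dvdn_exp2l ?leq_subr // -expnB ?leq_subr //.
by rewrite subKn.
Qed.

Lemma w_in : w \in <[xx]>.
Proof. by rewrite -[<[xx]>]/(<[xx ^+ 1]>) memC /= expg1 ?eqxx z_in. Qed.

Definition F2 (H : {set prod 'I_2 Q}) := ((w \in H) * (2 ^ k.+1 %/ #|H|))%N.
Definition F2' (H : {set prod 'I_2 Q}) := ((w \in H) * (2 ^ k.+1 %/ (#|H| * 2)))%N.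

Lemma term j : j <= k ->
  let C := <[xx ^+ (2 ^ (k - j))]> in
  let t := (#|Tset AA <[xx]> C| %/ #|C|)%N in
  (1 + 1 * t + F2 C + F2' C * t)%N = gg k j.
Proof.
move=> jk C t; rewrite /t /F2 /F2' /C cardTA // cardC // wC //.
have E1 : forall a b, b <= a -> (2 ^ a %/ 2 ^ b = 2 ^ (a - b))%N.
  by move=> a b ba; rewrite expnB.
rewrite /gg.
have [-> | j0] := eqVneq j 0.
  rewrite (_ : 0 == k = false) /=; last by move: k1; clear; lia.
  by rewrite expn1 expn0 divn1.
rewrite (_ : 0 < j) /=; last by move: j0; clear; lia.
have [-> | jk'] := eqVneq j k.
  by rewrite divnn expn_gt0 -expnSr divnn expn_gt0 E1 // subSn // subnn.
rewrite -expnSr !E1 ?leqnSn //; last by move: jk; clear; lia.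
rewrite subSS subSn // subnn expn1 subSn // expnS; move: (2 ^ (k - j))%N => p; lia.
Qed.

Lemma count_main' : #|subgroups [set: prod 'I_2 Q]| = (4 * 2 ^ k + 3 * k - 3)%N.
Proof.
rewrite -sum1_card.
rewrite (@decomp _ [set: prod 'I_2 Q]%G AA_group (subsetT _) hA2G (fun _ => 1%N) (fun _ => 1%N)) //.
rewrite [X in (_ + X)%N](eq_bigr (fun C : {group _} => F2 C)); last first.
  move=> C; rewrite inE => sCA; rewrite /= ?mul1n TsetG //= /F2.
  by case: (w \in C); rewrite ?cardGdA ?cards0 ?div0n ?mul1n ?mul0n.
rewrite (@decomp _ AA_group <[xx]>%G sXA hA2A (fun _ => 1%N) (fun _ => 1%N)) //.
rewrite (@decomp _ AA_group <[xx]>%G sXA hA2A (fun C => F2 C) (fun C => F2' C)); last first.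
  move=> H sHA nHX; rewrite /F2 /F2' (card_out hA2A sHA nHX) inE.
  by rewrite [w \in <[xx]>]w_in andbT.
rewrite !sum_cyclic ordxx divisors2 !big_map.
rewrite -!big_split /=.
rewrite -(sumgg k1) [in RHS]/=; apply: eq_big_seq => j Hj.
have jk : j <= k by move: Hj; rewrite inE mem_iota; lia.
rewrite -expnB // addnA; exact: term.
Qed.
End Conc.

End Cx.

Lemma geo2 n : (\sum_(j <- iota 0 n) 2 ^ j = 2 ^ n - 1)%N.
Proof.
elim: n => [|n IH]; first by rewrite big_nil.
rewrite -[n.+1]addn1 iotaD big_cat big_seq1 IH add0n addn1 expnS.
have : (0 < 2 ^ n)%N by rewrite expn_gt0.
move: (2 ^ n)%N => p /=; lia.
Qed.

Theorem corollary2p4 (m : nat) (hm : 2 <= m) :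
  let n := 2 ^ m.-1 in
  #|subgroups [set: Z2xQ (4 * n)]| =
    5 * sigma n + 3 * tau n - 2 * n + 2.
Proof.
move=> n; rewrite /n /Z2xQ.
have -> : 4 * 2 ^ m.-1 = 2 ^ m.+1.
  by rewrite (_ : m.+1 = (m.-1).+2) ?expnS ?mulnA //; move: hm; clear; lia.
have n2 : 2 < m.+1 by [].
have [[x y] genQ [oy y2 xy]] :=
  generators_quaternion (G := [set: 'Q_(2 ^ m.+1)]%G) n2 (isog_refl _).
have [[_ o4 inv] _ [_ _ inv2 _ _] _ _] := quaternion_structure n2 genQ (isog_refl _).
have [oQ _ ox _] := genQ.
rewrite (@count_main' _ x m); first last.
- by move=> u ou; apply: inv2.
- by move=> c q Xc nq; apply: inv => //; rewrite !inE nq.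
- by move=> q nq; apply: o4; rewrite !inE nq.
- by rewrite -cardsT.
- by [].
- by move: hm; clear; lia.
rewrite /sigma /tau divisors2 big_map size_map size_iota geo2.
rewrite (_ : m.-1.+1 = m); last by move: hm; clear; lia.
rewrite (_ : 2 ^ m = 2 * 2 ^ m.-1); last first.
  by rewrite -expnS; congr (_ ^ _); move: hm; clear; lia.
have : 0 < 2 ^ m.-1 by rewrite expn_gt0.
move: (2 ^ m.-1) => p; move: hm; clear; lia.
Qed.
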